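(* A reaction network $(X,\mathscr{R})$ admits a Lewis realization if and only if it is conservative.
   Context: A reaction network (RN) $(X,\mathscr{R})$ consists of a finite non-empty set $X$ of species and a finite non-empty set $\mathscr{R}$ of reactions. Each reaction $r$ is given by stoichiometric coefficients $s^-_{xr},s^+_{xr}\in\mathbb{N}_0$. The stoichiometric matrix $S\in\mathbb{Z}^{X\times\mathscr{R}}$ has entries $S_{xr}=s^+_{xr}-s^-_{xr}$. The paper assumes throughout that RNs are closed: every reaction $r$ has $x,y$ with $S_{xr}<0<S_{yr}$. The RN is conservative if there is $m\in\mathbb{R}^X$ with all entries positive and $m^\top S=0$. An sf-instance is a matrix $A\in\mathbb{N}_0^{\mathcal{A}\times X}$ ($\mathcal{A}$ a non-empty finite set) with every column nonzero and $AS=0$. An sf-realization is an sf-instance with $\operatorname{im}A^\top=\ker S^\top$. Let $\mathcal{A}$ be a non-empty finite set and $\mathrm{val}:\mathcal{A}\to\mathbb{N}=\{1,2,\dots\}$ a function. Consider multigraphs (loops allowed) with vertex colouring $\alpha:V\to\mathcal{A}$. The degree $d(u)$ of a vertex is the number of non-loop edge incidences at $u$ plus twice the number of loops at $u$. A Lewis instance is an assignment of vertex-coloured multigraphs $\Gamma_x=(V_x,E_x,\alpha_x)$ to all $x\in X$ such that: - (i) $d(u)=\mathrm{val}(\alpha_x(u))$ for all $u\in V_x$ and $x\in X$; - (ii) the matrix $A$ with $A_{ax}=|\{u\in V_x:\alpha_x(u)=a\}|$ is an sf-instance. A Lewis realization is a Lewis instance whose matrix $A$ is an sf-realization (for some choice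 of $\mathcal{A}$ and $\mathrm{val}$). *)

(* Defs.v *)
From HB Require Import structures.
From mathcomp Require Import all_boot all_order all_algebra.
From mathcomp Require Import reals.
Set Implicit Arguments. Unset Strict Implicit. Unset Printing Implicit Defensive.
Import Order.TTheory GRing.Theory Num.Theory.
Local Open Scope ring_scope.

(* A finite vertex-coloured multigraph (loops and parallel edges allowed):
   each edge e has two endpoints (ends e).1, (ends e).2 (a loop has them equal). *)
Record mgraph (Acol : finType) := MGraph {
  vert : finType;
  edge : finType;
  ends : edge -> vert * vert;
  colour : vert -> Acol
}.

(* degree: number of non-loop edge incidences plus twice the number of loops *)
Definition mdeg (Acol : finType) (G : mgraph Acol) (u : vert G) : nat :=
  (#|[set e : edge G | (ends e).1 == u]| + #|[set e : edge G | (ends e).2 == u]|)%N.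

Section RN.
Variables (X Rr : finType) (sm sp : X -> Rr -> nat).

Definition stoich (x : X) (r : Rr) : int := (sp x r)%:Z - (sm x r)%:Z.

Definition closed_RN : Prop :=
  forall r : Rr, exists x y : X, (stoich x r < 0) /\ (0 < stoich y r).

Definition conservative (R : realType) : Prop :=
  exists m : X -> R, (forall x, 0 < m x) /\
    forall r : Rr, \sum_(x : X) m x * (stoich x r)%:~R = 0.

Definition sf_instance (Acol : finType) (A : Acol -> X -> nat) : Prop :=
  (0 < #|Acol|)%N /\
  (forall x : X, exists a : Acol, A a x <> 0%N) /\
  (forall (a : Acol) (r : Rr), \sum_(x : X) (A a x)%:Z * stoich x r = 0).

(* sf-realization: additionally im A^T = ker S^T (as subspaces of R^X) *)
Definition sf_realization (R : realType) (Acol : finType) (A : Acol -> X -> nat) : Prop :=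
  sf_instance A /\
  forall v : X -> R,
    (forall r : Rr, \sum_(x : X) v x * (stoich x r)%:~R = 0) <->
    (exists c : Acol -> R, forall x : X, v x = \sum_(a : Acol) c a * (A a x)%:R).

Definition lewis_matrix (Acol : finType) (G : X -> mgraph Acol) : Acol -> X -> nat :=
  fun a x => #|[set u : vert (G x) | colour u == a]|.

Definition lewis_instance (Acol : finType) (val : Acol -> nat) (G : X -> mgraph Acol) : Prop :=
  (forall (x : X) (u : vert (G x)), mdeg u = val (colour u)) /\
  sf_instance (lewis_matrix G).

Definition lewis_realization (R : realType) : Prop :=
  exists (Acol : finType) (val : Acol -> nat) (G : X -> mgraph Acol),
    (0 < #|Acol|)%N /\ (forall a, 0 < val a)%N /\
    lewis_instance val G /\ sf_realization R (lewis_matrix G).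

End RN.

(* Main.v *)
Require Import Defs.
From HB Require Import structures.
From mathcomp Require Import all_boot all_order all_algebra.
From mathcomp Require Import reals ring lra zify.
Set Implicit Arguments. Unset Strict Implicit. Unset Printing Implicit Defensive.
Import Order.TTheory GRing.Theory Num.Theory.
Local Open Scope ring_scope.

Section S.
Variables (X Rr : finType) (sm sp : X -> Rr -> nat).
Local Notation S := (stoich sm sp).

Lemma sum_rank (V : nmodType) (F : 'I_#|X| -> V) :
  \sum_(x : X) F (enum_rank x) = \sum_(j < #|X|) F j.
Proof.
rewrite [RHS](reindex (@enum_rank X)) //.
by exists enum_val => ? _; [exact: enum_rankK | exact: enum_valK].
Qed.

Lemma int_kernel_basis (R : realType) : exists k (b : 'I_k -> X -> int),
  (forall i r, \sum_x b i x * S x r = 0) /\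
  (forall v : X -> R, (forall r, \sum_x v x * (S x r)%:~R = 0) ->
     exists c : 'I_k -> R, forall x, v x = \sum_i c i * (b i x)%:~R).
Proof.
pose SQ : 'M[rat]_(#|X|, #|Rr|) :=
  \matrix_(j, l) (S (enum_val j) (enum_val l))%:~R.
have mkK := mulmx_ker SQ.
have mapK : map_mx (ratr : rat -> R) (kermx SQ) = kermx (map_mx ratr SQ) by exact: map_kermx.
move: (kermx SQ) mkK mapK => K mkK mapK.
pose b i x := numq (K i (enum_rank x)) *
   \prod_(j | j != enum_rank x) denq (K i j).
pose d i := \prod_j denq (K i j).
have bE i x : (b i x)%:~R = K i (enum_rank x) * (d i)%:~R :> rat.
  by rewrite /b /d [in RHS](bigD1 (enum_rank x)) //= !intrM numqE mulrA.
have dn0 i : (d i)%:~R != 0 :> rat.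
  by rewrite intr_eq0 /d prodf_seq_neq0; apply/allP => j _; rewrite denq_neq0.
exists #|X|, b; split.
- move=> i r; apply: (@intr_inj rat); rewrite rmorph_sum /= rmorph0.
  transitivity (\sum_x (fun j => K i j * (d i)%:~R * SQ j (enum_rank r)) (enum_rank x)).
    by apply: eq_bigr => x _; rewrite /= intrM bE [SQ _ _]mxE !enum_rankK.
  rewrite (sum_rank (fun j => K i j * (d i)%:~R * SQ j (enum_rank r))).
  under eq_bigr do rewrite mulrAC.
  rewrite -mulr_suml.
  move: mkK => /matrixP /(_ i (enum_rank r)); rewrite !mxE => ->.
  by rewrite mul0r.
- move=> v Hv.
  pose vr : 'rV[R]_#|X| := \row_j v (enum_val j).
  have : (vr <= kermx (map_mx ratr SQ))%MS.
    apply/sub_kermxP; apply/rowP => l; rewrite !mxE -sum_rank -[RHS](Hv (enum_val l)).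
    by apply: eq_bigr => x _; rewrite !mxE enum_rankK ratr_int.
  rewrite -mapK => /submxP [w Hw].
  exists (fun i => w 0 i / (d i)%:~R) => x.
  have -> : v x = vr 0 (enum_rank x) by rewrite mxE enum_rankK.
  rewrite Hw !mxE; apply: eq_bigr => i _; rewrite !mxE.
  have -> : K i (enum_rank x) = (b i x)%:~R / (d i)%:~R by rewrite bE mulfK.
  rewrite fmorph_div /= !ratr_int.
  by rewrite mulrAC mulrA.
Qed.

Lemma ker_sum (T : comPzRingType) (s : X -> Rr -> T) (I : finType) (c : I -> T)
  (u : I -> X -> T) : (forall i r, \sum_x u i x * s x r = 0) ->
  forall r, \sum_x (\sum_i c i * u i x) * s x r = 0.
Proof.
move=> H r; under eq_bigr do rewrite mulr_suml.
rewrite exchange_big /= big1 // => i _.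
under eq_bigr do rewrite -mulrA.
by rewrite -mulr_sumr H mulr0.
Qed.

Lemma ker_lin (T : comPzRingType) (s : X -> Rr -> T) (a : T) (u1 u2 : X -> T) :
  (forall r, \sum_x u1 x * s x r = 0) -> (forall r, \sum_x u2 x * s x r = 0) ->
  forall r, \sum_x (a * u1 x + u2 x) * s x r = 0.
Proof.
move=> H1 H2 r; under eq_bigr do rewrite mulrDl -mulrA.
by rewrite big_split /= -mulr_sumr H1 H2 mulr0 addr0.
Qed.

Lemma kerZ_R (R : realType) (w : X -> int) :
  (forall r, \sum_x w x * S x r = 0) ->
  forall r, \sum_x ((w x)%:~R : R) * (S x r)%:~R = 0.
Proof.
move=> H r.
have e : forall x, ((w x)%:~R : R) * (S x r)%:~R = (w x * S x r)%:~R.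
  by move=> x; rewrite intrM.
rewrite (eq_bigr _ (fun x _ => e x)).
by rewrite -rmorph_sum H.
Qed.

Lemma le_sum_term (T : numDomainType) (I : finType) (F : I -> T) i :
  (forall j, 0 <= F j) -> F i <= \sum_j F j.
Proof.
move=> H; rewrite (bigD1 i) //= lerDl; exact: sumr_ge0.
Qed.

Lemma sf_inst_ext (Acol : finType) (A A' : Acol -> X -> nat) :
  (forall a x, A a x = A' a x) -> sf_instance sm sp A -> sf_instance sm sp A'.
Proof.
move=> E [h1 [h2 h3]]; split=> //; split=> [x|a r].
  by have [a ha] := h2 x; exists a; rewrite -E.
by rewrite -[RHS](h3 a r); apply: eq_bigr => x _; rewrite E.
Qed.

Lemma sf_real_ext (R : realType) (Acol : finType) (A A' : Acol -> X -> nat) :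
  (forall a x, A a x = A' a x) -> sf_realization sm sp R A -> sf_realization sm sp R A'.
Proof.
move=> E [h1 h2]; split; first exact: sf_inst_ext h1.
move=> v; rewrite h2; split=> -[c hc]; exists c => x; rewrite hc;
  by apply: eq_bigr => a _; rewrite E.
Qed.

End S.

Theorem proposition13 (R : realType) (X Rr : finType) (sm sp : X -> Rr -> nat) :
  (0 < #|X|)%N -> (0 < #|Rr|)%N -> closed_RN sm sp ->
  (lewis_realization sm sp R <-> conservative sm sp R).
Proof.
move=> _ _ _; split.
- move=> [Acol [val [G [_ [_ [[_ [_ [ncol Hrows]]] _]]]]]].
  pose A := lewis_matrix G.
  exists (fun x => \sum_a 1 * (((A a x)%:Z)%:~R : R)); split.
    move=> x; have [a0 ha0] := ncol x.
    rewrite (bigD1 a0) //= mul1r.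
    have h1 : (0 : R) < ((A a0 x)%:Z)%:~R by rewrite ltr0z ltz_nat lt0n; apply/eqP.
    have h2 : (0 : R) <= \sum_(a | a != a0) 1 * ((A a x)%:Z)%:~R.
      by apply: sumr_ge0 => a _; rewrite mul1r ler0z.
    by rewrite ltr_wpDr.
  apply: ker_sum => a r; exact: kerZ_R.
- move=> [m [mpos mker]].
  have [k [b [bker bspan]]] := int_kernel_basis sm sp R.
  have [c cE] := bspan m mker.
  pose B x : R := \sum_i `|((b i x)%:~R : R)|.
  have [N hN] : exists N : nat, forall x, B x < N%:R * m x.
    exists (\sum_x (Num.truncn (B x / m x)).+1)%N => x.
    have h1 : B x / m x < (Num.truncn (B x / m x)).+1%:R by exact: truncnS_gt.
    rewrite ltr_pdivrMr // in h1.
    apply: (lt_le_trans h1); apply: ler_wpM2r; first exact: ltW.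
    by rewrite ler_nat (bigD1 x) //= leq_addr.
  pose z i : int := Num.floor (N%:R * c i).
  pose M x : int := \sum_i z i * b i x.
  have Mpos x : (0 < M x)%R.
    rewrite -(ltr0z R).
    have h : N%:R * m x - (M x)%:~R <= B x.
      have MR : (M x)%:~R = \sum_i (z i)%:~R * ((b i x)%:~R : R).
        by rewrite /M rmorph_sum; apply: eq_bigr => i _; rewrite rmorphM.
      rewrite MR cE mulr_sumr -sumrB /B; apply: ler_sum => i _.
      rewrite mulrA -mulrBl.
      have /andP [f0 f1] := floor_itv (N%:R * c i).
      have hf0 : 0 <= N%:R * c i - (z i)%:~R by rewrite subr_ge0.
      have hf1 : N%:R * c i - (z i)%:~R <= 1.
        by move: f1; rewrite intrD /z; lra.
      apply: (le_trans (ler_norm _)); rewrite normrM ger0_norm //.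
      exact: ler_piMl.
    have := hN x; lra.
  pose L : int := \sum_i \sum_x `|b i x|.
  have Lb i x : `|b i x| <= L.
    have h1 : `|b i x| <= \sum_x' `|b i x'|.
      by apply: (@le_sum_term _ _ (fun x' => `|b i x'|)) => x'; exact: normr_ge0.
    have h2 : \sum_x' `|b i x'| <= L.
      apply: (@le_sum_term _ _ (fun i => \sum_x `|b i x|) i) => j.
      by apply: sumr_ge0 => x' _; exact: normr_ge0.
    exact: le_trans h1 h2.
  pose row i x : int := L * M x + b i x.
  have row0 i x : 0 <= row i x.
    have h1 := Lb i x; have h2 := Mpos x; have h3 := ler_norm (- b i x).
    rewrite normrN in h3; rewrite /row; nia.
  pose A (a : 'I_k.+1) x : nat :=
    match unlift ord0 a with None => `|M x|%N | Some i => `|row i x|%N end.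
  have A0 x : (A ord0 x)%:Z = M x by rewrite /A unlift_none gez0_abs // ltW.
  have AS i x : (A (lift ord0 i) x)%:Z = row i x by rewrite /A liftK gez0_abs.
  have Mker : forall r, \sum_x M x * stoich sm sp x r = 0.
    exact: (ker_sum z bker).
  have rowker i : forall r, \sum_x row i x * stoich sm sp x r = 0.
    exact: (ker_lin L Mker (bker i)).
  have Aker a r : \sum_x (A a x)%:Z * stoich sm sp x r = 0.
    case: (unliftP ord0 a) => [i ->|->].
      by under eq_bigr do rewrite AS; exact: rowker.
    by under eq_bigr do rewrite A0; exact: Mker.
  have sfA : sf_realization sm sp R A.
    split.
      split; first by rewrite card_ord.
      split => // x; exists ord0 => h; have := A0 x; rewrite h => e.
      by have := Mpos x; rewrite -e ltxx.
    move=> v; split.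
      move=> hv; have [cv cvE] := bspan v hv.
      have [c' [c'0 c'S]] : exists c' : 'I_k.+1 -> R,
          c' ord0 = - (L%:~R * \sum_i cv i) /\ forall i, c' (lift ord0 i) = cv i.
        exists (fun a => match unlift ord0 a with
                       | None => - (L%:~R * \sum_i cv i) | Some i => cv i end).
        by split => [|i]; rewrite ?unlift_none ?liftK.
      exists c' => x.
      have nat2int : forall n : nat, (n%:R : R) = (n%:Z)%:~R by [].
      have E2 : \sum_(i < k) c' (lift ord0 i) * (A (lift ord0 i) x)%:R
                = \sum_i cv i * ((row i x)%:~R : R).
        by apply: eq_bigr => i _; rewrite c'S nat2int AS.
      have E3 : \sum_i cv i * ((row i x)%:~R : R) =
          (\sum_i cv i) * (L%:~R * (M x)%:~R) + \sum_i cv i * (b i x)%:~R.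
        rewrite mulr_suml -big_split; apply: eq_bigr => i _.
        by rewrite /row intrD intrM mulrDr.
      rewrite big_ord_recl c'0 E2 nat2int A0 E3 cvE.
      ring.
    move=> [cv hv] r.
    rewrite (eq_bigr (fun x => (\sum_a cv a * ((A a x)%:R : R)) * (stoich sm sp x r)%:~R));
      last by move=> x _; rewrite hv.
    move: r; apply: ker_sum => a r'.
    have H := @kerZ_R X Rr sm sp R (fun x => (A a x)%:Z) (Aker a) r'.
    exact: H.
  pose V x := {a : 'I_k.+1 & 'I_(A a x)}.
  pose G x := @MGraph 'I_k.+1 (V x) (V x) (fun e => (e, e)) (fun u => tag u).
  have LM a x : A a x = lewis_matrix G a x.
    rewrite /lewis_matrix /=.
    have -> : [set u : V x | tag u == a] =
        (fun j => existT (fun b => 'I_(A b x)) a j) @: [set: 'I_(A a x)].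
      apply/setP => -[a' j]; rewrite inE /=.
      case: (boolP (a' == a)) => [/eqP ea | na].
        by subst a'; apply/esym/imsetP; exists j; rewrite ?inE.
      apply/esym/negbTE/imsetP => -[j' _ e].
      by move: (congr1 tag e) => /= ea; rewrite ea eqxx in na.
    by rewrite card_imset ?cardsT ?card_ord // => j1 j2; exact: eq_from_Tagged.
  exists 'I_k.+1, (fun _ => 2%N), G.
  split; first by rewrite card_ord.
  split; first by [].
  split; last exact: sf_real_ext LM sfA.
  split; last exact: sf_inst_ext LM sfA.1.
  move=> x u; rewrite /mdeg /=.
  suff -> : [set e : V x | e == u] = [set u] by rewrite cards1.
  by apply/setP => e; rewrite !inE.
Qed.
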